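(* Let $\mathcal G=(V,E,r)$ be a graph and $k\ge2$. (1) $\rho_k(\mathbf A(\mathcal G))\le (k-1)|V|+1$. (2) Equality holds in (1) if and only if $\mathcal G$ contains $k$ edge-disjoint spanning trees. In particular, in case of equality the graph $\mathcal G$ has edge-connectivity at least $k$.
   Context: A graph $\mathcal G=(V,E,r)$ consists of a finite vertex set $V$, a finite edge set $E$ disjoint from $V$, and a map $r$ assigning to each edge a two-element subset of $V$; multiple edges allowed, no loops. An agglomeration on $\mathcal G$ is a function $a\colon V\cup E\to\mathbb N_0$ with $a(v)\ge a(e)$ whenever $v$ is incident with $e$; $\mathbf A(\mathcal G)$ is the monoid of agglomerations under pointwise addition. For a reduced atomic monoid $H$ and $a\in H$, $\mathsf L(a)$ is the set of $n$ such that $a$ is a sum of $n$ atoms, and for $k\ge2$ the refined elasticity is $\rho_k(H)=\sup\{\sup\mathsf L(a): a\in H,\ k\in\mathsf L(a)\}$. *)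

(* Defs.v *)
From mathcomp Require Import all_boot.
Set Implicit Arguments. Unset Strict Implicit. Unset Printing Implicit Defensive.

(* A graph G = (V, E, r): V, E finite types (disjoint by construction), and
   r e the set of ends of the edge e (required to have exactly two elements). *)

Notation func V E := {ffun (V + E)%type -> nat}.

Definition addf (V E : finType) (a b : func V E) : func V E := [ffun x => a x + b x].
Definition zerof (V E : finType) : func V E := [ffun => 0].

Definition is_agg (V E : finType) (r : E -> {set V}) (a : func V E) : Prop :=
  forall (v : V) (e : E), v \in r e -> a (inr e) <= a (inl v).

(* Atoms of the reduced monoid A(G) (the only unit is 0). *)
Definition is_atom (V E : finType) (r : E -> {set V}) (a : func V E) : Prop :=
  [/\ is_agg r a, a <> zerof V E &
     forall b c, is_agg r b -> is_agg r c -> a = addf b c ->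
       b = zerof V E \/ c = zerof V E].

Definition in_lengths (V E : finType) (r : E -> {set V}) (a : func V E) (n : nat) : Prop :=
  exists s : seq (func V E),
    [/\ size s = n, (forall x, x \in s -> is_atom r x) & a = foldr (@addf V E) (zerof V E) s].

(* { sup L(a) : a in A(G), k in L(a) } flattened: n such that n, k in L(a) for some a *)
Definition rho_set (V E : finType) (r : E -> {set V}) (k n : nat) : Prop :=
  exists a, [/\ is_agg r a, in_lengths r a k & in_lengths r a n].

(* m is the supremum (in N) of a set of naturals; sup of the empty set is 0. *)
Definition is_sup_nat (S : nat -> Prop) (m : nat) : Prop :=
  (forall n, S n -> n <= m) /\ (forall m', (forall n, S n -> n <= m') -> m <= m').

Definition rho_eq (V E : finType) (r : E -> {set V}) (k m : nat) : Prop :=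
  is_sup_nat (rho_set r k) m.

Definition adjT (V E : finType) (r : E -> {set V}) (T : {set E}) : rel V :=
  fun u w => [exists e in T, [&& u \in r e, w \in r e & u != w]].

(* (V, T) is connected (a connected graph is nonempty) *)
Definition connectedT (V E : finType) (r : E -> {set V}) (T : {set E}) : Prop :=
  (exists v : V, True) /\ forall u w : V, connect (adjT r T) u w.

Definition acyclicT (V E : finType) (r : E -> {set V}) (T : {set E}) : Prop :=
  forall e, e \in T -> forall u w, u \in r e -> w \in r e ->
    connect (adjT r (T :\ e)) u w -> u = w.

Definition spanning_tree (V E : finType) (r : E -> {set V}) (T : {set E}) : Prop :=
  connectedT r T /\ acyclicT r T.

Definition has_k_edge_disjoint_spanning_trees (V E : finType) (r : E -> {set V}) (k : nat) : Prop :=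
  exists Ts : 'I_k -> {set E},
    (forall i, spanning_tree r (Ts i)) /\
    (forall i j, i != j -> [disjoint Ts i & Ts j]).

Definition edge_conn_ge (V E : finType) (r : E -> {set V}) (k : nat) : Prop :=
  forall F : {set E}, #|F| < k -> connectedT r (~: F).

(* Main.v *)
Require Import Defs.
From mathcomp Require Import all_boot.
From mathcomp Require Import zify.
From Stdlib Require Classical_Prop.
Set Implicit Arguments. Unset Strict Implicit. Unset Printing Implicit Defensive.

Lemma foldr_addfE (V E : finType) (s : seq (func V E)) z :
  foldr (@addf V E) (zerof V E) s z = \sum_(y <- s) y z.
Proof.
elim: s => [|y s IH] /=; first by rewrite big_nil /zerof ffunE.
by rewrite big_cons /addf ffunE IH.
Qed.

Lemma atom_le1 (V E : finType) (r : E -> {set V}) x z : is_atom r x -> x z <= 1.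
Proof.
case=> ag nz spl; rewrite leqNgt; apply/negP => hz.
pose b : func V E := [ffun y => minn (x y) 1].
pose c : func V E := [ffun y => x y - minn (x y) 1].
have agb : is_agg r b by move=> v e he; rewrite !ffunE; have := ag v e he; lia.
have agc : is_agg r c by move=> v e he; rewrite !ffunE; have := ag v e he; lia.
have hex : x = addf b c by apply/ffunP => y; rewrite /addf !ffunE subnKC // geq_minl.
by case: (spl b c agb agc hex) => /ffunP/(_ z); rewrite /zerof !ffunE; lia.
Qed.

Lemma end_exists (V E : finType) (r : E -> {set V}) (hr : forall e, #|r e| = 2) e :
  exists u, u \in r e.
Proof. by apply/card_gt0P; rewrite hr. Qed.

Lemma ends2 (V E : finType) (r : E -> {set V}) (hr : forall e, #|r e| = 2) e :
  exists u w, [/\ u \in r e, w \in r e & u != w].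
Proof.
have /cards2P [u [w [hne he]]] : #|r e| == 2 by rewrite hr.
by exists u, w; rewrite he !inE !eqxx orbT.
Qed.

Lemma ends_only (V E : finType) (r : E -> {set V}) (hr : forall e, #|r e| = 2) e u w z :
  u \in r e -> w \in r e -> u != w -> z \in r e -> z = u \/ z = w.
Proof.
move=> hu hw huw hz.
have /cards2P [x [y [hne he]]] : #|r e| == 2 by rewrite hr.
move: hu hw hz; rewrite he !inE => /orP[]/eqP hu' /orP[]/eqP hw' /orP[]/eqP hz'; subst;
  try (by left); try (by right); by rewrite eqxx in huw.
Qed.

Lemma agg_zero (V E : finType) (r : E -> {set V}) (hr : forall e, #|r e| = 2) x :
  is_agg r x -> (forall v, x (inl v) = 0) -> x = zerof V E.
Proof.
move=> ag h; apply/ffunP => [[v|e]]; rewrite /zerof ffunE ?h //.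
have [u hu] := end_exists hr e; by have := ag u e hu; rewrite h leqn0 => /eqP.
Qed.

Definition vs (V E : finType) (x : func V E) : {set V} := [set v | x (inl v) != 0].
Definition es (V E : finType) (x : func V E) : {set E} := [set e | x (inr e) != 0].

Lemma atom_vertex (V E : finType) (r : E -> {set V}) (hr : forall e, #|r e| = 2) x :
  is_atom r x -> exists v, v \in vs x.
Proof.
move=> at0; case: (at0) => ag nz _.
case: (boolP [exists v, x (inl v) != 0]) => [/existsP [v hv]|/existsPn h].
  by exists v; rewrite inE.
case: nz; apply: (agg_zero hr ag) => v.
by have := h v; rewrite negbK => /eqP.
Qed.

Lemma atom_connect (V E : finType) (r : E -> {set V}) x :
  is_atom r x -> forall u w, x (inl u) != 0 -> x (inl w) != 0 ->
  connect (adjT r (es x)) u w.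
Proof.
case=> ag nz spl u w hu hw.
pose C := [pred v | connect (adjT r (es x)) u v].
pose reg (y : V + E) := match y with inl v => C v | inr e => [exists v in r e, C v] end.
pose b : func V E := [ffun y => if reg y then x y else 0].
pose c : func V E := [ffun y => if reg y then 0 else x y].
have agb : is_agg r b.
  move=> v e he; rewrite !ffunE /=.
  case: ifP => // /existsP [v' /andP [hv' Cv']].
  have [/eqP x0|xn0] := boolP (x (inr e) == 0); first by rewrite x0.
  have Cv : connect (adjT r (es x)) u v.
    have [<-//|ne] := eqVneq v' v.
    apply: connect_trans Cv' _; apply: connect1.
    by apply/existsP; exists e; rewrite inE xn0 hv' he ne.
  by rewrite Cv; apply: ag.
have agc : is_agg r c.
  move=> v e he; rewrite !ffunE /=.
  case: ifP => // /existsPn hn.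
  have := hn v; rewrite he /= => /negbTE ->; exact: ag.
have hex : x = addf b c by apply/ffunP => y; rewrite /addf !ffunE; case: (reg y); rewrite ?addn0.
case: (spl b c agb agc hex) => /ffunP h; rewrite /zerof in h.
  by have := h (inl u); rewrite !ffunE /= connect0 => hx; rewrite hx in hu.
have := h (inl w); rewrite !ffunE /=; case: ifP => // _ hx; by rewrite hx in hw.
Qed.

Lemma sum_le_const (T : eqType) (s : seq T) (f : T -> nat) M :
  (forall x, x \in s -> f x <= M) -> \sum_(x <- s) f x <= size s * M.
Proof.
elim: s => [|y s IH] h; first by rewrite big_nil.
rewrite big_cons /= mulSn leq_add ?h ?mem_head // IH // => x hx.
by apply: h; rewrite inE hx orbT.
Qed.

Lemma sum_eq_const (T : eqType) (s : seq T) (f : T -> nat) M :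
  (forall x, x \in s -> f x <= M) -> size s * M <= \sum_(x <- s) f x ->
  forall x, x \in s -> f x = M.
Proof.
elim: s => [|y s IH] h hs x; first by [].
have hy : f y <= M by apply: h; rewrite mem_head.
have hs' : forall x, x \in s -> f x <= M by move=> z hz; apply: h; rewrite inE hz orbT.
have := sum_le_const hs'.
move: hs; rewrite big_cons /= mulSn => hs hle.
rewrite inE => /orP [/eqP ->|hx]; first lia.
apply: IH => //; lia.
Qed.

Lemma leq_sum_mem (T : eqType) (s : seq T) (f : T -> nat) x :
  x \in s -> f x <= \sum_(y <- s) f y.
Proof. by move=> hx; rewrite (big_rem x hx) /= leq_addr. Qed.

Lemma sum_neq0 (T : eqType) (s : seq T) (f : T -> nat) :
  \sum_(y <- s) f y != 0 -> exists2 y, y \in s & f y != 0.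
Proof.
elim: s => [|z s IH]; first by rewrite big_nil.
rewrite big_cons; have [hz|hz] := eqVneq (f z) 0.
  by rewrite hz add0n => /IH [y hy hfy]; exists y => //; rewrite inE hy orbT.
by move=> _; exists z; rewrite ?mem_head.
Qed.

Lemma exists_max (T : eqType) (f : T -> nat) (s : seq T) : 0 < size s ->
  exists2 x, x \in s & forall y, y \in s -> f y <= f x.
Proof.
elim: s => [|z s IH] //= _.
case: s IH => [|z' s] IH.
  by exists z; rewrite ?mem_head // => y; rewrite inE => /eqP ->.
have [x hx hmax] := IH isT.
have [le|lt] := leqP (f z) (f x).
  exists x; first by rewrite inE hx orbT.
  by move=> y; rewrite inE => /orP [/eqP ->|/hmax].
exists z; first by rewrite mem_head.
move=> y; rewrite inE => /orP [/eqP ->//|/hmax h]; lia.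
Qed.

Definition mergeL (V : finType) (p : V -> V) (S : {set V}) (s0 : V) : V -> V :=
  fun w => if p w \in p @: S then p s0 else p w.

Lemma merge_card (V : finType) (p : V -> V) (S : {set V}) s0 : s0 \in S ->
  #|p @: setT| + 1 <= #|mergeL p S s0 @: setT| + #|p @: S|.
Proof.
move=> hs0; set q := mergeL p S s0.
have h3 : p s0 \notin (p @: setT) :\: (p @: S) by rewrite inE imset_f.
have hsub : p s0 |: ((p @: setT) :\: (p @: S)) \subset q @: setT.
  apply/subsetP => y; rewrite in_setU1 => /orP [/eqP ->|].
    by apply/imsetP; exists s0 => //; rewrite /q /mergeL imset_f.
  rewrite inE => /andP [hy /imsetP [w _ hw]]; subst y.
  by apply/imsetP; exists w => //; rewrite /q /mergeL (negbTE hy).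
have := subset_leq_card hsub; rewrite cardsU1 h3 => H.
have := cardsID (p @: S) (p @: setT).
have := subset_leq_card (subsetIr (p @: setT) (p @: S)).
lia.
Qed.

Lemma merge_const (V : finType) (p : V -> V) (S : {set V}) s0 x y : x \in S -> y \in S ->
  mergeL p S s0 x = mergeL p S s0 y.
Proof. by move=> hx hy; rewrite /mergeL !imset_f. Qed.

Lemma merge_pres (V : finType) (p : V -> V) (S : {set V}) s0 x y : p x = p y ->
  mergeL p S s0 x = mergeL p S s0 y.
Proof. by rewrite /mergeL => ->. Qed.

Lemma uf (V : finType) (s : seq {set V}) : (forall S, S \in s -> S != set0) ->
  forall p0 : V -> V, exists p : V -> V,
   [/\ forall S, S \in s -> forall x y, x \in S -> y \in S -> p x = p y,
       forall x y, p0 x = p0 y -> p x = p y &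
       #|p0 @: setT| <= #|p @: setT| + \sum_(S <- s) (#|S| - 1)].
Proof.
elim: s => [|S s IH] hne p0.
  by exists p0; split => //; rewrite big_nil addn0.
have /set0Pn [s0 hs0] := hne S (mem_head _ _).
have [p [h1 h2 h3]] := IH (fun T hT => hne T (@mem_behead _ (S :: s) _ hT)) (mergeL p0 S s0).
exists p; split.
- move=> T; rewrite inE => /orP [/eqP -> x y hx hy|hT]; last exact: h1.
  by apply: h2; apply: merge_const.
- by move=> x y hxy; apply: h2; apply: merge_pres.
- have := merge_card p0 hs0; have := leq_imset_card p0 S.
  have : 0 < #|S| by apply/card_gt0P; exists s0.
  rewrite big_cons; lia.
Qed.

Lemma atom_val (V E : finType) (r : E -> {set V}) x v :
  is_atom r x -> x (inl v) = (v \in vs x).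
Proof.
move=> /(atom_le1 (inl v)); rewrite inE.
by case: (x (inl v)) => [|[|n]].
Qed.

Lemma sum_vs (V E : finType) (r : E -> {set V}) x :
  is_atom r x -> \sum_v x (inl v) = #|vs x|.
Proof.
move=> hx; rewrite -sum1_card [RHS]big_mkcond /=.
by apply: eq_bigr => v _; rewrite (atom_val v hx); case: (v \in vs x).
Qed.

Lemma Ssum (V E : finType) (r : E -> {set V}) (a : func V E) s :
  (forall x, x \in s -> is_atom r x) -> a = foldr (@addf V E) (zerof V E) s ->
  \sum_v a (inl v) = \sum_(x <- s) #|vs x|.
Proof.
move=> hs ->; under eq_bigr do rewrite foldr_addfE.
rewrite exchange_big /=; apply: eq_big_seq => x hx.
exact: sum_vs (hs x hx).
Qed.

Lemma ar47 n : 0 < n -> n = 1 + (n - 1).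
Proof. lia. Qed.

Lemma ar75 (M c V' I P : nat) (b : bool) : M + c = V' -> I <= c -> P <= b + I -> P + M <= V' + 1.
Proof. case: b => /=; lia. Qed.

Lemma ar80 (n d S sig P M V' KM : nat) : S = n + sig -> S <= M + KM -> V' + d <= P + sig ->
  P + M <= V' + 1 -> n + d <= KM + 1.
Proof. lia. Qed.

Lemma ar84 (n d S sig P M V' KV : nat) : S = n + sig -> n + d = KV + 1 -> V' + d <= P + sig ->
  P + M <= V' + 1 -> V' <= M -> M <= V' -> V' + KV <= S.
Proof. lia. Qed.

Lemma core (V E : finType) (r : E -> {set V}) (hr : forall e, #|r e| = 2)
  (a : func V E) sA sL (p : V -> V) d :
  (forall x, x \in sA -> is_atom r x) -> (forall x, x \in sL -> is_atom r x) ->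
  a = foldr (@addf V E) (zerof V E) sA -> a = foldr (@addf V E) (zerof V E) sL ->
  0 < size sA ->
  (forall x, x \in sL -> forall u w, u \in vs x -> w \in vs x -> p u = p w) ->
  #|V| + d <= #|p @: setT| + \sum_(x <- sL) (#|vs x| - 1) ->
  size sL + d <= (size sA - 1) * #|V| + 1 /\
  (size sL + d = (size sA - 1) * #|V| + 1 -> 2 <= size sA ->
     forall x, x \in sA -> vs x = setT).
Proof.
move=> hA hL haA haL hsz hconst hP.
have HA := Ssum hA haA; have HL := Ssum hL haL.
set S := \sum_v a (inl v) in HA HL.
have H1 : \sum_(x <- sL) #|vs x| = size sL + \sum_(x <- sL) (#|vs x| - 1).
  rewrite -sum1_size -big_split; apply: eq_big_seq => x hx /=.
  have [v hv] := atom_vertex hr (hL x hx).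
  have : 0 < #|vs x| by apply/card_gt0P; exists v.
  exact: ar47.
have [xs hxs hmax] := exists_max (fun x => #|vs x|) hsz.
set M := #|vs xs| in hmax.
have H2 : S <= size sA * M by rewrite HA; apply: sum_le_const.
have H5 : M <= #|V| by apply: max_card.
have [u0 hu0] := atom_vertex hr (hA xs hxs).
have H6 : 0 < M by apply/card_gt0P; exists u0.
have hblock : forall w, w \in vs xs -> p w = p u0.
  move=> w hw.
  have hc : connect (adjT r (es xs)) u0 w.
    by apply: (atom_connect (hA xs hxs)); [move: hu0|move: hw]; rewrite inE.
  have hcl : closed (adjT r (es xs)) [pred z | p z == p u0].
    move=> y z /existsP [e /and4P [he hy hz _]].
    suff hyz : p y = p z by rewrite !inE /= hyz.
    have hae : 0 < a (inr e).
      move: he; rewrite inE -lt0n => he; apply: leq_trans he _.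
      rewrite haA foldr_addfE; exact: (leq_sum_mem (fun x : func V E => x (inr e)) hxs).
    move: hae; rewrite lt0n haL foldr_addfE => /sum_neq0 [y' hy' hy'e].
    have ag := (let: And3 ag _ _ := hL y' hy' in ag).
    apply: (hconst y' hy'); rewrite inE -lt0n;
      [apply: leq_trans (ag _ _ hy)|apply: leq_trans (ag _ _ hz)]; by rewrite lt0n.
  have := closed_connect hcl hc; rewrite !inE eqxx => /esym/eqP; exact.
have H4 : #|p @: setT| + M <= #|V| + 1.
  have hsub : p @: setT \subset p u0 |: (p @: ~: vs xs).
    apply/subsetP => y /imsetP [z _ ->]; rewrite in_setU1.
    case: (boolP (z \in vs xs)) => hz; first by rewrite hblock ?eqxx.
    by rewrite imset_f ?orbT // inE.
  have := subset_leq_card hsub; have := leq_imset_card p (~: vs xs).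
  have := cardsC (vs xs); rewrite cardsU1; exact: ar75.
have HSn : S = size sL + \sum_(x <- sL) (#|vs x| - 1) by rewrite HL H1.
have [k' hk'] : exists k', size sA = k'.+1 by case: (size sA) hsz => // k' _; exists k'.
have HAk := H2; rewrite hk' mulSn in H2.
have Hk : k' * M <= k' * #|V| by apply: leq_mul.
have H80 := ar80 HSn H2 hP H4.
rewrite hk' subSS subn0.
split; first by apply: leq_trans H80 _; rewrite leq_add2r.
move=> Heq hk2 x hx.
have HkM : k' * #|V| <= k' * M by rewrite -(leq_add2r 1) -Heq.
have HM : #|V| <= M by rewrite -(leq_pmul2l (_ : 0 < k')).
have HS : size sA * #|V| <= \sum_(x <- sA) #|vs x|.
  by rewrite hk' mulSn -HA; exact: ar84 HSn Heq hP H4 HM H5.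
have hb : forall x, x \in sA -> #|vs x| <= #|V| by move=> y _; exact: max_card.
have hc := sum_eq_const hb HS hx.
by apply/eqP; rewrite eqEcard subsetT cardsT /=; move: hc => /= ->.
Qed.

Lemma part1 (V E : finType) (r : E -> {set V}) (hr : forall e, #|r e| = 2) k n :
  2 <= k -> rho_set r k n -> n <= (k - 1) * #|V| + 1.
Proof.
move=> hk [a [ag [sA [hsA hatA haA]] [sL [hsL hatL haL]]]].
have hne : forall S, S \in map (@vs V E) sL -> S != set0.
  move=> S /mapP [x hx ->]; have [v hv] := atom_vertex hr (hatL x hx).
  by apply/set0Pn; exists v.
have [p [h1 _ h3]] := uf hne (fun x : V => x).
rewrite imset_id cardsT big_map in h3.
have hc : forall x, x \in sL -> forall u w, u \in vs x -> w \in vs x -> p u = p w.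
  by move=> x hx; apply: h1; apply: map_f.
have [] := core (d := 0) hr hatA hatL haA haL _ hc _.
- by rewrite hsA; exact: ltnW hk.
- by rewrite addn0.
by rewrite hsA hsL addn0.
Qed.

Lemma ar40 a b : a <= 1 -> 1 < a + b -> b != 0.
Proof. lia. Qed.

Lemma ar78 a b c : a <= b -> c <= a -> c + 1 <= true + b.
Proof. move=> /= h1 h2; rewrite addn1 add1n ltnS; exact: leq_trans h2 h1. Qed.

Lemma ar_hP nV P P1 P2 I s1 s2 R : nV + 1 <= P1 + s1 ->
  P1 + 1 <= P2 + I -> I + 1 <= s2 -> P2 <= P + R -> 0 < s1 ->
  nV + 1 <= P + (s1 - 1 + (s2 - 1 + R)).
Proof. lia. Qed.

Lemma edge_le1 (V E : finType) (r : E -> {set V}) (hr : forall e, #|r e| = 2) k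
  (a : func V E) sA sL :
  2 <= k -> size sA = k -> size sL = (k - 1) * #|V| + 1 ->
  (forall x, x \in sA -> is_atom r x) -> (forall x, x \in sL -> is_atom r x) ->
  a = foldr (@addf V E) (zerof V E) sA -> a = foldr (@addf V E) (zerof V E) sL ->
  forall e, a (inr e) <= 1.
Proof.
move=> hk hsA hsL hatA hatL haA haL e; rewrite leqNgt; apply/negP => h2.
have hs : \sum_(x <- sL) x (inr e) != 0 by rewrite -foldr_addfE -haL -lt0n; exact: ltnW h2.
have [x1 hx1 hx1e] := sum_neq0 hs.
have hs2 : \sum_(x <- rem x1 sL) x (inr e) != 0.
  move: h2; rewrite haL foldr_addfE (big_rem x1 hx1) /=.
  have := atom_le1 (inr e) (hatL x1 hx1); exact: ar40.
have [x2 hx2 hx2e] := sum_neq0 hs2.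
set rest := rem x2 (rem x1 sL).
have hperm : perm_eq sL [:: x1, x2 & rest].
  apply: perm_trans (perm_to_rem hx1) _; rewrite perm_cons; exact: perm_to_rem.
set l := [:: x1, x2 & rest].
have hsl : size l = size sL by rewrite (perm_size hperm).
have hatl : forall x, x \in l -> is_atom r x by move=> x; rewrite -(perm_mem hperm); exact: hatL.
have hal : a = foldr (@addf V E) (zerof V E) l.
  by apply/ffunP => z; rewrite haL !foldr_addfE (perm_big _ hperm).
have [u [w [hu hw huw]]] := ends2 hr e.
have hin : forall x, x \in sL -> x (inr e) != 0 -> forall v, v \in r e -> v \in vs x.
  move=> x hx hxe v hv; case: (hatL x hx) => ag _ _.
  by rewrite inE -lt0n; apply: leq_trans (ag v e hv); rewrite lt0n.
have hx2' : x2 \in sL by apply: (mem_rem hx2).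
have hu1 := hin x1 hx1 hx1e u hu; have hw1 := hin x1 hx1 hx1e w hw.
have hu2 := hin x2 hx2' hx2e u hu; have hw2 := hin x2 hx2' hx2e w hw.
pose p1 := mergeL (fun x : V => x) (vs x1) u.
pose p2 := mergeL p1 (vs x2) u.
have hne : forall S, S \in map (@vs V E) rest -> S != set0.
  move=> S /mapP [x hx ->].
  have hx' : x \in sL by apply: (mem_rem (mem_rem hx)).
  have [v hv] := atom_vertex hr (hatL x hx').
  by apply/set0Pn; exists v.
have [p [h1 h2' h3]] := uf hne p2.
rewrite big_map in h3.
have c1 := merge_card (fun x : V => x) hu1.
rewrite !imset_id cardsT -/p1 in c1.
have c2 := merge_card p1 hu2; rewrite -/p2 in c2.
have c2' : #|p1 @: vs x2| + 1 <= #|vs x2|.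
  have hsub : p1 @: vs x2 \subset p1 @: (vs x2 :\ u).
    apply/subsetP => y /imsetP [z hz ->].
    have [hzu|hzu] := eqVneq z u.
      subst z; have -> : p1 u = p1 w by apply: merge_const.
      apply: imset_f.
      by rewrite in_setD1 eq_sym huw hw2.
    by apply: imset_f; rewrite in_setD1 hzu hz.
  have := subset_leq_card hsub; have := leq_imset_card p1 (vs x2 :\ u).
  rewrite (cardsD1 u (vs x2)) hu2; exact: ar78.
have hc : forall x, x \in l -> forall y z, y \in vs x -> z \in vs x -> p y = p z.
  move=> x; rewrite !inE => /or3P [/eqP ->|/eqP ->|hx] y z hy hz.
  - by apply: h2'; apply: merge_pres; apply: merge_const.
  - by apply: h2'; apply: merge_const.
  - by apply: (h1 (vs x)) => //; apply: map_f.
have hP : #|V| + 1 <= #|p @: setT| + \sum_(x <- l) (#|vs x| - 1).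
  rewrite /l !big_cons.
  have : 0 < #|vs x1| by apply/card_gt0P; exists u.
  clearbody p1 p2; move: c1 c2 c2' h3; exact: ar_hP.
have [] := core (d := 1) hr hatA hatl haA hal _ hc hP.
- by rewrite hsA; exact: ltnW hk.
by rewrite hsl hsA hsL addn1 ltnn.
Qed.

Lemma adjT_sym (V E : finType) (r : E -> {set V}) (F : {set E}) : symmetric (adjT r F).
Proof.
move=> x y; apply/idP/idP => /existsP [e /and4P [he hx hy hne]];
  by apply/existsP; exists e; rewrite he hx hy eq_sym hne.
Qed.

Lemma connect_mono (V E : finType) (r : E -> {set V}) (F G : {set E}) u w :
  F \subset G -> connect (adjT r F) u w -> connect (adjT r G) u w.
Proof.
move=> hFG; apply: connect_sub => x y /existsP [e /and4P [he hx hy hne]].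
by apply: connect1; apply/existsP; exists e; rewrite (subsetP hFG e he) hx hy hne.
Qed.

Lemma minimal_acyclic (V E : finType) (r : E -> {set V}) (hr : forall e, #|r e| = 2)
  (T : {set E}) :
  (forall u w, connect (adjT r T) u w) ->
  (forall T' : {set E}, T' \subset T -> (forall u w, connect (adjT r T') u w) -> #|T| <= #|T'|) ->
  acyclicT r T.
Proof.
move=> hc hmin e he u w hu hw hcon.
case: (eqVneq u w) => // huw; exfalso.
have hc' : forall x y, connect (adjT r (T :\ e)) x y.
  move=> x y; apply: (connect_sub _ (hc x y)) => x' y' /existsP [e' /and4P [he' hx' hy' hne]].
  case: (eqVneq e' e) => [ee|ne].
    subst e'.
    have [->|->] := ends_only hr hu hw huw hx'; have [->|->] := ends_only hr hu hw huw hy';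
      rewrite ?eqxx // in hne *.
    by rewrite (sym_connect_sym (adjT_sym r (T :\ e))).
  by apply: connect1; apply/existsP; exists e'; rewrite in_setD1 ne he' hx' hy' hne.
have := hmin (T :\ e) (subD1set T e) hc'.
by rewrite [X in X <= _](cardsD1 e T) he add1n ltnn.
Qed.

Lemma hlp1 (m n : nat) : 1 = m + n -> m != 0 -> n = 0.
Proof. by case: m => [|[|m]] //; case: n. Qed.

Lemma hlp0 (m n : nat) : 0 = m + n -> m = 0 /\ n = 0.
Proof. by case: m; case: n. Qed.

Definition ind (V E : finType) (F : {set E}) : func V E :=
  [ffun y => match y with inl _ => 1 | inr e => if e \in F then 1 else 0 end].

Definition sing (V E : finType) (v : V) : func V E :=
  [ffun y => if y == inl v then 1 else 0].

Lemma ind_agg (V E : finType) (r : E -> {set V}) F : is_agg r (ind V F).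
Proof. by move=> v e _; rewrite !ffunE; case: (e \in F). Qed.

Lemma ind_atom (V E : finType) (r : E -> {set V}) (hr : forall e, #|r e| = 2) F (v0 : V) :
  (forall u w, connect (adjT r F) u w) -> is_atom r (ind V F).
Proof.
move=> hc; split; first exact: ind_agg.
  by move/ffunP/(_ (inl v0)); rewrite /zerof !ffunE.
move=> b c agb agc hbc.
have hv : forall z, ind V F z = b z + c z by move=> z; rewrite hbc /addf ffunE.
have key : forall x y e, e \in F -> x \in r e -> y \in r e -> b (inl x) != 0 -> b (inl y) != 0.
  move=> x y e he hx hy hbx.
  have hcx : c (inl x) = 0.
    by move: (hv (inl x)) hbx; rewrite ffunE; exact: hlp1.
  have hce : c (inr e) = 0 by apply/eqP; rewrite -leqn0 -hcx; apply: agc.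
  have hbe : b (inr e) = 1 by move: (hv (inr e)); rewrite ffunE he hce addn0 => ->.
  by rewrite -lt0n -hbe; apply: agb.
have hcl : closed (adjT r F) [pred v | b (inl v) != 0].
  move=> x y /existsP [e /and4P [he hx hy _]]; rewrite !inE /=.
  by apply/idP/idP; [apply: (key x y e) | apply: (key y x e)].
case: (boolP (b (inl v0) != 0)) => h0.
  right; apply: (agg_zero hr agc) => v.
  have := closed_connect hcl (hc v0 v); rewrite !inE h0 /= => /esym hbv.
  by move: (hv (inl v)) hbv; rewrite ffunE; exact: hlp1.
left; apply: (agg_zero hr agb) => v.
have := closed_connect hcl (hc v0 v); rewrite !inE (negbTE h0) /= => /esym/negbFE/eqP.
by [].
Qed.

Lemma sing_atom (V E : finType) (r : E -> {set V}) (v : V) : is_atom r (sing E v).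
Proof.
split.
- by move=> u e _; rewrite !ffunE.
- by move/ffunP/(_ (inl v)); rewrite /zerof !ffunE eqxx.
move=> b c _ _ hbc.
have hv : forall z, sing E v z = b z + c z by move=> z; rewrite hbc /addf ffunE.
have hz : forall z, z != inl v -> b z = 0 /\ c z = 0.
  by move=> z hz; move: (hv z); rewrite ffunE (negbTE hz); exact: hlp0.
case: (eqVneq (b (inl v)) 0) => hb.
  left; apply/ffunP => z; rewrite /zerof ffunE.
  by case: (eqVneq z (inl v)) => [->|/hz []].
right; apply/ffunP => z; rewrite /zerof ffunE.
case: (eqVneq z (inl v)) => [->|/hz [] //].
by move: (hv (inl v)) hb; rewrite ffunE eqxx; exact: hlp1.
Qed.

Lemma agg_foldr (V E : finType) (r : E -> {set V}) (s : seq (func V E)) :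
  (forall x, x \in s -> is_agg r x) -> is_agg r (foldr (@addf V E) (zerof V E) s).
Proof.
move=> h v e he; rewrite !foldr_addfE big_seq [X in _ <= X]big_seq.
by apply: leq_sum => x hx; exact: h x hx v e he.
Qed.

Lemma sum_nseq (T : Type) c (x : T) (F : T -> nat) : \sum_(y <- nseq c x) F y = c * F x.
Proof. by elim: c => [|c IH]; rewrite ?big_nil ?mul0n //= big_cons IH mulSn. Qed.

Lemma size_fl (T U : Type) c (g : T -> U) (l : seq T) :
  size (flatten [seq nseq c (g v) | v <- l]) = c * size l.
Proof. by elim: l => [|v l IH]; rewrite ?muln0 //= size_cat size_nseq IH mulnS. Qed.

Lemma sum_fl (T U : Type) c (g : T -> U) (l : seq T) (F : U -> nat) :
  \sum_(y <- flatten [seq nseq c (g v) | v <- l]) F y = c * \sum_(v <- l) F (g v).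
Proof.
elim: l => [|v l IH]; first by rewrite !big_nil muln0.
by rewrite /= big_cat sum_nseq IH big_cons mulnDr.
Qed.

Lemma sum_two (F : nat -> nat) n i j : i < n -> j < n -> i != j ->
  F i + F j <= \sum_(0 <= t < n) F t.
Proof.
move=> hi hj hij; rewrite big_mkord (bigD1 (Ordinal hi)) //= (bigD1 (Ordinal hj)) /=.
  by rewrite leq_add2l leq_addr.
by rewrite -val_eqE /= eq_sym.
Qed.

Lemma trees_rho (V E : finType) (r : E -> {set V}) (hr : forall e, #|r e| = 2) k :
  2 <= k -> has_k_edge_disjoint_spanning_trees r k -> rho_set r k ((k - 1) * #|V| + 1).
Proof.
move=> hk [Ts [hT hdis]].
have k0 : 0 < k by apply: ltnW.
pose i0 := Ordinal k0.
have [[[v0 _] _] _] := hT i0.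
have hconT : forall i u w, connect (adjT r (Ts i)) u w by move=> i; case: (hT i) => [[_ ?] _].
pose U := \bigcup_i Ts i.
pose sA := [seq ind V (Ts i) | i <- enum 'I_k].
pose sL := ind V U :: flatten [seq nseq (k - 1) (sing E v) | v <- enum V].
exists (foldr (@addf V E) (zerof V E) sA); split.
- by apply: agg_foldr => x /mapP [i _ ->]; exact: ind_agg.
- exists sA; split => //; first by rewrite size_map size_enum_ord.
  by move=> x /mapP [i _ ->]; exact: (ind_atom hr v0 (hconT i)).
exists sL; split.
- by rewrite /= size_fl -cardE addn1.
- move=> x; rewrite in_cons => /orP [/eqP ->|].
    apply: (ind_atom hr v0) => u w; apply: (connect_mono (F := Ts i0)) (hconT i0 u w).
    exact: (bigcup_sup i0).
  move=> /flattenP [s /mapP [v _ ->]]; rewrite mem_nseq => /andP [_ /eqP ->].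
  exact: sing_atom.
apply/ffunP => z; rewrite !foldr_addfE big_map big_cons sum_fl.
case: z => [w|e].
  under eq_bigr do rewrite ffunE.
  rewrite sum1_size size_enum_ord ffunE big_enum /= (bigD1 w) //= ffunE eqxx big1 ?addn0.
    by rewrite muln1 add1n subn1 prednK.
  by move=> v hv; rewrite ffunE; case: eqP => // -[hw]; rewrite hw eqxx in hv.
rewrite [X in _ + _ * X]big1 ?muln0 ?addn0; last by move=> v _; rewrite ffunE.
rewrite ffunE big_enum /=.
case: (boolP (e \in U)) => [/bigcupP [i1 _ hi]|hn].
  rewrite (bigD1 i1) //= ffunE hi big1 ?addn0 // => j hj.
  by rewrite ffunE (disjointFl (hdis _ _ hj) hi).
rewrite big1 // => i _; rewrite ffunE; case: ifP => // hi.
by case/negP: hn; apply/bigcupP; exists i.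
Qed.

Lemma rho_trees (V E : finType) (r : E -> {set V}) (hr : forall e, #|r e| = 2) k :
  2 <= k -> rho_set r k ((k - 1) * #|V| + 1) -> has_k_edge_disjoint_spanning_trees r k.
Proof.
move=> hk [a [ag [sA [hsA hatA haA]] [sL [hsL hatL haL]]]].
have hne : forall S, S \in map (@vs V E) sL -> S != set0.
  move=> S /mapP [x hx ->]; have [v hv] := atom_vertex hr (hatL x hx).
  by apply/set0Pn; exists v.
have [p [h1 _ h3]] := uf hne (fun x : V => x).
rewrite imset_id cardsT big_map in h3.
have hc : forall x, x \in sL -> forall u w, u \in vs x -> w \in vs x -> p u = p w.
  by move=> x hx; apply: h1; apply: map_f.
have hsz : 0 < size sA by rewrite hsA; exact: ltnW hk.
have h3' : #|V| + 0 <= #|p @: setT| + \sum_(x <- sL) (#|vs x| - 1) by rewrite addn0.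
have [_ hfull] := core hr hatA hatL haA haL hsz hc h3'.
have hsp : forall x, x \in sA -> vs x = setT by apply: hfull; rewrite ?hsA ?hsL ?addn0.
have hle := edge_le1 hr hk hsA hsL hatA hatL haA haL.
pose X (i : 'I_k) := nth (zerof V E) sA i.
have hXin : forall i, X i \in sA by move=> i; apply: mem_nth; rewrite hsA.
have hXc : forall i u w, connect (adjT r (es (X i))) u w.
  move=> i u w; have hu : u \in vs (X i) by rewrite (hsp _ (hXin i)) inE.
  have hw : w \in vs (X i) by rewrite (hsp _ (hXin i)) inE.
  move: hu hw; rewrite !inE => hu hw; exact: (atom_connect (hatA _ (hXin i)) hu hw).
pose connb (T : {set E}) := [forall u, forall w, connect (adjT r T) u w].
pose P i (T : {set E}) := (T \subset es (X i)) && connb T.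
have hP0 : forall i, P i (es (X i)).
  by move=> i; rewrite /P subxx; apply/forallP => u; apply/forallP => w; exact: hXc.
pose Ts i := [arg min_(T < es (X i) | P i T) #|T|].
have hTs : forall i, Ts i \subset es (X i) /\ spanning_tree r (Ts i).
  move=> i; rewrite /Ts; case: (arg_minnP (fun T : {set E} => #|T|) (hP0 i)) => T /andP [hsub hcb] hmin.
  have hcT : forall u w, connect (adjT r T) u w.
    by move=> u w; move/forallP: hcb => /(_ u)/forallP/(_ w).
  split => //; split.
    split => //; have [v _] := atom_vertex hr (hatA _ (hXin i)); by exists v.
  apply: (minimal_acyclic hr hcT) => T' hT' hc'; apply: hmin.
  rewrite /P (subset_trans hT' hsub) /=.
  by apply/forallP => u; apply/forallP => w; exact: hc'.
exists Ts; split; first by move=> i; case: (hTs i).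
move=> i j hij; rewrite -setI_eq0; apply/eqP/setP => e; rewrite inE in_set0.
apply/negP => /andP [hei hej].
have hi := subsetP (hTs i).1 e hei; have hj := subsetP (hTs j).1 e hej.
have := hle e; rewrite haA foldr_addfE (big_nth (zerof V E)).
have := sum_two (fun t => (nth (zerof V E) sA t) (inr e)) (n := size sA)
  (i := i) (j := j) _ _ hij.
rewrite hsA => /(_ (ltn_ord i) (ltn_ord j)).
move: hi hj; rewrite !inE -!lt0n /X => hi hj g2 g1.
have := leq_trans (leq_add hi hj) (leq_trans g2 g1); by [].
Qed.

Lemma trees_conn (V E : finType) (r : E -> {set V}) k :
  0 < k -> has_k_edge_disjoint_spanning_trees r k -> edge_conn_ge r k.
Proof.
move=> k0 [Ts [hT hdis]] F hF.
have [i hi] : exists i, [disjoint Ts i & F].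
  case: (boolP [exists i, [disjoint Ts i & F]]) => [/existsP //|/existsPn h].
  exfalso.
  have hx : forall i, exists e, e \in Ts i :&: F.
    by move=> i; apply/set0Pn; rewrite setI_eq0; exact: h.
  have [e0 _] := hx (Ordinal k0).
  pose f i := odflt e0 [pick e in Ts i :&: F].
  have hf : forall i, f i \in Ts i :&: F.
    move=> i; rewrite /f; case: pickP => [e he //|hn].
    by have [e he] := hx i; have := hn e; rewrite he.
  have finj : injective f.
    move=> i j hij; apply/eqP; apply: contraT => hne.
    have := hf i; have := hf j; rewrite !inE hij => /andP [hj _] /andP [hi' _].
    by have := disjointFl (hdis _ _ hne) hj; rewrite hi'.
  have : #|f @: setT| <= #|F|.
    by apply: subset_leq_card; apply/subsetP => y /imsetP [i _ ->]; have := hf i; rewrite inE => /andP [].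
  by rewrite card_imset // cardsT card_ord leqNgt hF.
have [[hv hc] _] := hT i.
split => // u w; apply: connect_sub (hc u w) => x y /existsP [e /and4P [he hx hy hne]].
apply: connect1; apply/existsP; exists e; rewrite hx hy hne inE andbT.
by rewrite (disjointFr hi he).
Qed.

Theorem theorem4p15 (V E : finType) (r : E -> {set V})
    (hr : forall e : E, #|r e| = 2) (k : nat) (hk : 2 <= k) :
  (forall n, rho_set r k n -> n <= (k - 1) * #|V| + 1)
  /\ (rho_eq r k ((k - 1) * #|V| + 1) <-> has_k_edge_disjoint_spanning_trees r k)
  /\ (rho_eq r k ((k - 1) * #|V| + 1) -> edge_conn_ge r k).
Proof.
have P1 : forall n, rho_set r k n -> n <= (k - 1) * #|V| + 1.
  by move=> n; apply: part1.
have fwd : rho_eq r k ((k - 1) * #|V| + 1) -> has_k_edge_disjoint_spanning_trees r k.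
  move=> [_ hsup]; apply: (rho_trees hr hk).
  apply: Classical_Prop.NNPP => hn.
  have := hsup ((k - 1) * #|V|) => /(_ _).
  suff H : forall n, rho_set r k n -> n <= (k - 1) * #|V|.
    by move=> /(_ H); rewrite addn1 ltnn.
  move=> n hn'; have := P1 n hn'; rewrite addn1 leq_eqVlt => /orP [/eqP hE|]; last by rewrite ltnS.
  by case: hn; rewrite addn1 -hE.
split => //; split; last first.
  by move=> h; apply: (trees_conn (ltnW hk)); apply: fwd.
split => // ht; split => // m' hm'.
exact: hm' (trees_rho hr hk ht).
Qed.
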